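(* Let $d\ge1$ be odd, $\mathcal{H}=\mathbb{C}^d$ and $\mathcal{K}=\mathbb{C}^2$. Suppose there exists a quaternion matrix $A\in\mathbb{H}^{d\times d}$ which is Hermitian ($A^\dagger=A$), satisfies $\operatorname{Re}A=0$ (every entry has zero real part), and has eigenvalue $d-1$ with multiplicity $\frac{d+1}2$ and eigenvalue $-(d+1)$ with multiplicity $\frac{d-1}2$. Then there exists a unitary $U\in\mathcal{B}(\mathcal{H}\otimes\mathcal{K})$ with $$\frac1{2d}\operatorname{tr}\big[U\,\overline U^{T_2}\big]=-1+\frac2{d^2}.$$
   Context: Quaternions $q=x_0+x_1i+x_2j+x_3k$ are identified with complex $2\times2$ matrices via $\hat q=\begin{pmatrix}x_0+ix_1&x_2+ix_3\\-x_2+ix_3&x_0-ix_1\end{pmatrix}$; a matrix $A\in\mathbb{H}^{d\times d}$ is identified with the complex $2d\times2d$ matrix $\hat A$ consisting of the $2\times2$ blocks $\hat A_{kl}$, i.e. with an element of $\mathcal{M}_d(\mathbb{C})\otimes\mathcal{M}_2(\mathbb{C})\cong\mathcal{B}(\mathcal{H}\otimes\mathcal{K})$. $A^\dagger$ is the quaternionic conjugate transpose (corresponding to $\hat A^\dagger$), $\operatorname{Re}q=x_0$. The eigenvalues of a quaternion matrix $A$ (right eigenvalues $Ax=x\lambda$) are the complex eigenvalues of $\hat A$ with nonnegative imaginary part; for Hermitian $A$ they are real, and an eigenvalue of $A$ of multiplicity $m$ is an eigenvalue of $\hat A$ of multiplicity $2m$. The partial transpose $T_2$ acts on the $\mathcal{K}$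 factor in the product basis, $(X\otimes Y)^{T_2}=X\otimes Y^T$, and $\overline U$ is the entrywise complex conjugate. *)

(* Defs.v *)
From HB Require Import structures.
From mathcomp Require Import all_boot all_order all_algebra.
From mathcomp Require Import complex.
From mathcomp Require Import Rstruct.
Set Implicit Arguments. Unset Strict Implicit. Unset Printing Implicit Defensive.
Import Order.TTheory GRing.Theory Num.Theory.
Local Open Scope ring_scope.

Notation Rr := Rdefinitions.R.
Notation C := (Rr[i]).

(* quaternions q = x0 + x1 i + x2 j + x3 k *)
Record quat := Quat { qx0 : Rr; qx1 : Rr; qx2 : Rr; qx3 : Rr }.

Definition qconj (q : quat) : quat := Quat (qx0 q) (- qx1 q) (- qx2 q) (- qx3 q).

Definition qhat (q : quat) : 'M[C]_2 :=
  \matrix_(a < 2, b < 2)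
    if (a == 0 :> nat) && (b == 0 :> nat) then Complex (qx0 q) (qx1 q)
    else if (a == 0 :> nat) then Complex (qx2 q) (qx3 q)
    else if (b == 0 :> nat) then Complex (- qx2 q) (qx3 q)
    else Complex (qx0 q) (- qx1 q).

(* H (x) K = C^d (x) C^2 with product basis indexed by (k, a);
   the basis vector e_k (x) f_a has index mxvec_index k a in 'I_(d * 2). *)
Definition tidx (d : nat) (r : 'I_(d * 2)) : 'I_d * 'I_2 :=
  enum_val (cast_ord (esym (mxvec_cast d 2)) r).

Definition qmxhat (d : nat) (A : 'M[quat]_d) : 'M[C]_(d * 2) :=
  \matrix_(r, c) qhat (A (tidx r).1 (tidx c).1) (tidx r).2 (tidx c).2.

Definition qadj (d : nat) (A : 'M[quat]_d) : 'M[quat]_d :=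
  \matrix_(k, l) qconj (A l k).

Definition qhermitian (d : nat) (A : 'M[quat]_d) : Prop := qadj A = A.

Definition qre_zero (d : nat) (A : 'M[quat]_d) : Prop :=
  forall k l, qx0 (A k l) = 0.

Definition mxconj (n : nat) (M : 'M[C]_n) : 'M[C]_n := map_mx (@conjc _) M.
Definition mxadj (n : nat) (M : 'M[C]_n) : 'M[C]_n := (mxconj M)^T.

Definition unitary (n : nat) (U : 'M[C]_n) : Prop :=
  U *m mxadj U = 1%:M /\ mxadj U *m U = 1%:M.

(* partial transpose on the K factor:
   (X^{T2})_{(k,a),(l,b)} = X_{(k,b),(l,a)}, so (X (x) Y)^{T2} = X (x) Y^T *)
Definition ptrans2 (d : nat) (X : 'M[C]_(d * 2)) : 'M[C]_(d * 2) :=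
  \matrix_(r, c) X (mxvec_index (tidx r).1 (tidx c).2)
                   (mxvec_index (tidx c).1 (tidx r).2).

(* Main.v *)
Require Import Defs.
From HB Require Import structures.
From mathcomp Require Import all_boot all_order all_algebra.
From mathcomp Require Import complex.
From mathcomp Require Import Rstruct zify ring.
Import Order.TTheory GRing.Theory Num.Theory.
Local Open Scope ring_scope.

Lemma tidx_mxvec d (i : 'I_d) (j : 'I_2) : tidx (mxvec_index i j) = (i, j).
Proof. by rewrite /tidx /mxvec_index cast_ordK enum_rankK. Qed.

Lemma qmxhatE d (A : 'M[quat]_d) k a l b :
  qmxhat A (mxvec_index k a) (mxvec_index l b) = qhat (A k l) a b.
Proof. by rewrite mxE !tidx_mxvec. Qed.

Lemma ptrans2E d (X : 'M[C]_(d*2)) k a l b :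
  ptrans2 X (mxvec_index k a) (mxvec_index l b) = X (mxvec_index k b) (mxvec_index l a).
Proof. by rewrite mxE !tidx_mxvec. Qed.

Lemma mxvec_eq d (k l : 'I_d) (a b : 'I_2) :
  (mxvec_index k a == mxvec_index l b) = ((k == l) && (a == b)).
Proof.
apply/eqP/andP => [H|[/eqP-> /eqP->]//].
by have := congr1 (@tidx d) H; rewrite !tidx_mxvec => -[-> ->].
Qed.

Lemma herm_hat d (A : 'M[quat]_d) : qhermitian A -> mxadj (qmxhat A) = qmxhat A.
Proof.
move=> H; apply/matrixP => r c.
case/mxvec_indexP: r => k a; case/mxvec_indexP: c => l b.
rewrite /mxadj /mxconj !mxE !tidx_mxvec /=.
have -> : A k l = qconj (A l k) by rewrite -{1}H mxE.
case: a => [[|[|//]] ?]; case: b => [[|[|//]] ?].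
all: by rewrite /qhat /= ?opprK.
Qed.

Lemma tr_hat d (A : 'M[quat]_d) : qre_zero A -> \tr (qmxhat A) = 0.
Proof.
move=> H; rewrite /mxtrace.
rewrite (reindex (fun p : 'I_d * 'I_2 => mxvec_index p.1 p.2)) /=; last first.
  exists (@tidx d) => [p _|r _]; first by rewrite tidx_mxvec -surjective_pairing.
  by case/mxvec_indexP: r => k a; rewrite tidx_mxvec.
rewrite -(pair_big xpredT xpredT (fun k a => qmxhat A (mxvec_index k a) (mxvec_index k a))) /=.
apply: big1 => k _; rewrite big_ord_recl big_ord1 !qmxhatE !mxE /= H.
by apply/eqP; rewrite eq_complex /= !addr0 subrr eqxx.
Qed.

Lemma ptconj_hat d (A : 'M[quat]_d) : qre_zero A ->
  ptrans2 (mxconj (qmxhat A)) = - qmxhat A.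
Proof.
move=> H; apply/matrixP => r c.
case/mxvec_indexP: r => k a; case/mxvec_indexP: c => l b.
rewrite ptrans2E /mxconj !mxE !tidx_mxvec /=.
case: a => [[|[|//]] ?]; case: b => [[|[|//]] ?].
all: by rewrite /qhat /= ?H; simpc; rewrite ?oppr0 ?opprK.
Qed.
Lemma mxadj_mul m (X Y : 'M[C]_m) : mxadj (X *m Y) = mxadj Y *m mxadj X.
Proof. by rewrite /mxadj /mxconj map_mxM trmx_mul. Qed.

Lemma mxadjB m (X Y : 'M[C]_m) : mxadj (X - Y) = mxadj X - mxadj Y.
Proof. by rewrite /mxadj /mxconj map_mxB linearB. Qed.

Lemma mxadj_scal m (x : Rr) : mxadj ((x%:C)%C%:M : 'M[C]_m) = (x%:C)%C%:M.
Proof. rewrite /mxadj /mxconj map_scalar_mx tr_scalar_mx; congr (_ %:M); exact: conjc_real. Qed.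

Lemma herm_sq0 m (M : 'M[C]_m) : mxadj M = M -> M *m M = 0 -> M = 0.
Proof.
move=> HM H0; apply/matrixP => i j; rewrite mxE.
have := congr1 (fun X : 'M[C]_m => X i i) H0; rewrite !mxE => Hs.
have Hle : forall l, 0 <= M i l * M l i.
  by move=> l; rewrite -{2}HM /mxadj /mxconj !mxE mulcJ_ge0.
have /psumr_eq0P Hz : \sum_(l < m) M i l * M l i = 0 by [].
have := Hz (fun l _ => Hle l) j isT => /eqP.
rewrite -{2}HM /mxadj /mxconj !mxE mulf_eq0 conjc_eq0 orbb => /eqP //.
Qed.

Lemma herm_pow n' (M : 'M[C]_n'.+1) j : mxadj M = M -> mxadj (M ^+ j) = M ^+ j.
Proof.
move=> HM; elim: j => [|j IH]; first by rewrite expr0 /mxadj /mxconj map_mx1 trmx1.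
by rewrite exprS -mulmxE mxadj_mul IH HM mulmxE -exprSr -exprS.
Qed.

Lemma herm_nil n' (M : 'M[C]_n'.+1) j : mxadj M = M -> M ^+ j.+1 = 0 -> M = 0.
Proof.
move=> HM; elim: j => [|j IH]; first by rewrite expr1.
move=> H; apply: IH; apply: herm_sq0; first exact: herm_pow.
by rewrite mulmxE -exprD addSn -addnS exprD H mulr0.
Qed.

Lemma key n' (Ah : 'M[C]_n'.+1) (a b : Rr) m k :
  mxadj Ah = Ah ->
  char_poly Ah = ('X - (Complex a 0)%:P) ^+ m * ('X - (Complex b 0)%:P) ^+ k ->
  (Ah - (Complex a 0)%:M) *m (Ah - (Complex b 0)%:M) = 0.
Proof.
move=> HA Hc.
have CH := Cayley_Hamilton Ah.
rewrite Hc rmorphM !rmorphXn !rmorphB /= horner_mx_X !horner_mx_C in CH.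
set P := Ah - _ in CH *; set Q := Ah - _ in CH *.
have HP : mxadj P = P by rewrite /P mxadjB HA (mxadj_scal _ a).
have HQ : mxadj Q = Q by rewrite /Q mxadjB HA (mxadj_scal _ b).
have cA : forall c, GRing.comm Ah c%:M by move=> c; rewrite /GRing.comm -!mulmxE scalar_mxC.
have cPA : GRing.comm P Ah.
  by apply/commr_sym/commrB; [exact: commr_refl| rewrite /GRing.comm -!mulmxE scalar_mxC].
have cPs : GRing.comm P (Complex b 0)%:M.
  apply/commr_sym/commrB; rewrite /GRing.comm -!mulmxE; first by rewrite scalar_mxC.
  by rewrite -!scalar_mxM mulrC.
have cPQ : P * Q = Q * P by apply: commrB.

apply: (@herm_nil _ _ (m + k)).
  by rewrite mxadj_mul HQ HP mulmxE cPQ.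
rewrite mulmxE exprMn_comm //.
have -> : (m + k).+1 = (k.+1 + m)%N by lia.
have -> : P^+(k.+1+m) * Q^+(k.+1+m) = P^+k.+1 * (P^+m * Q^+k) * (Q * Q^+m).
  by rewrite exprD (exprD Q) (exprSr Q k) !mulrA.
by rewrite CH mulr0 mul0r.
Qed.

Lemma mxadjD m (X Y : 'M[C]_m) : mxadj (X + Y) = mxadj X + mxadj Y.
Proof. by rewrite /mxadj /mxconj map_mxD linearD. Qed.

Lemma mxadj1 n' : mxadj (1 : 'M[C]_n'.+1) = 1.
Proof. by rewrite /mxadj /mxconj map_mx1 trmx1. Qed.

Lemma mxadjZ m (x : C) (X : 'M[C]_m) : mxadj (x *: X) = (x^*)%C *: mxadj X.
Proof. by rewrite /mxadj /mxconj map_mxZ linearZ. Qed.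

Lemma final n' (Ah : 'M[C]_n'.+1) (d : nat) :
  n'.+1 = (d * 2)%N -> (0 < d)%N -> mxadj Ah = Ah -> \tr Ah = 0 ->
  (Ah - (d%:R - 1)%:M) *m (Ah - (- (d%:R + 1))%:M) = 0 ->
  unitary ((d%:R)^-1 *: (1%:M + Ah)) /\
  (2 * d%:R)^-1 * \tr (((d%:R)^-1 *: (1%:M + Ah)) *m ((d%:R)^-1 *: (1%:M - Ah)))
     = -1 + 2 / (d%:R ^+ 2).
Proof.
move=> hn hd HA HT M0.
set D : C := d%:R.
have D0 : D != 0 by rewrite pnatr_eq0 -lt0n.
have E1 : (1 + Ah) * (1 + Ah) = (D ^+ 2)%:M.
  have := erefl (horner_mx Ah ((1 + 'X)^+2 - (D^+2)%:P)).
  rewrite [X in _ = horner_mx _ X](_ : _ = ('X - (D - 1)%:P) * ('X - (-(D+1))%:P)); last first.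
    by rewrite rmorphB rmorphN rmorphD rmorph1 rmorphXn; ring.
  have R1 : horner_mx Ah (('X - (D - 1)%:P) * ('X - (-(D+1))%:P)) = 0.
    by rewrite rmorphM (rmorphB (horner_mx Ah)) (rmorphB (horner_mx Ah)) /= !horner_mx_X !horner_mx_C -mulmxE M0.
  rewrite R1 rmorphB rmorphXn rmorphD rmorph1 /= horner_mx_X horner_mx_C.
  by move/eqP; rewrite subr_eq0 expr2 => /eqP.
have E2 : (1 + Ah) * (1 - Ah) = 2%:M + 2%:M * Ah - (D ^+ 2)%:M.
  have := erefl (horner_mx Ah ((1 + 'X) * (1 - 'X))).
  rewrite [X in _ = horner_mx _ X](_ : _ = 2%:P + 2%:P * 'X - (1 + 'X)^+2); last first.
    by rewrite -[2%:P]/((1 + 1)%:P) rmorphD rmorph1; ring.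
  rewrite rmorphM rmorphD rmorphB rmorph1 /= horner_mx_X.
  rewrite rmorphB rmorphD rmorphM rmorphXn !rmorphD !rmorph1 /= !horner_mx_X expr2 E1.
  have two : (2%:M : 'M[C]_n'.+1) = 1 + 1 by rewrite raddfMn /= mulr2n.
  by [] .
have HU : mxadj (D^-1 *: (1%:M + Ah)) = D^-1 *: (1%:M + Ah).
  by rewrite mxadjZ mxadjD mxadj1 HA conjc_inv conjc_nat.
split.
  rewrite /unitary HU -scalemxAl -scalemxAr scalerA mulmxE E1.
  by rewrite -scalemx1 scalerA -expr2 -exprMn mulVf // expr1n scale1r.
rewrite -scalemxAl -scalemxAr scalerA mxtraceZ mulmxE E2 raddfB !raddfD /=.
rewrite [(_ + _) * Ah]mulrDl (_ : 1%:M * Ah = Ah); last exact: mul1r.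
have nE : forall x : C, x *+ (d * 2) = x * (D * 2) by move=> x; rewrite /D -natrM mulr_natr.
rewrite mxtraceD HT addr0 !mxtrace_scalar hn !nE.
field; exact: D0.
Qed.

Lemma mxconjE m (X : 'M[C]_m) i j : mxconj X i j = conjc (X i j).
Proof. by rewrite mxE. Qed.
Lemma oppmxE m (X : 'M[C]_m) i j : (- X) i j = - X i j.
Proof. by rewrite mxE. Qed.
Lemma scaleDE m (c : C) (X : 'M[C]_m) i j : (c *: (1%:M + X)) i j = c * ((i == j)%:R + X i j).
Proof. by rewrite !mxE. Qed.
Lemma scaleBE m (c : C) (X : 'M[C]_m) i j : (c *: (1%:M - X)) i j = c * ((i == j)%:R - X i j).
Proof. by rewrite !mxE. Qed.

Theorem proposition10 (d : nat) (hd1 : (1 <= d)%N) (hodd : odd d) :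
  (exists A : 'M[quat]_d,
      qhermitian A /\ qre_zero A /\
      char_poly (qmxhat A) =
        ('X - (Complex (d%:R - 1 : Rr) 0)%:P) ^+ (d.+1./2 * 2)
        * ('X - (Complex (- (d%:R + 1) : Rr) 0)%:P) ^+ (d.-1./2 * 2)) ->
  exists U : 'M[C]_(d * 2),
    unitary U /\
    (2 * d%:R)^-1 * \tr (U *m ptrans2 (mxconj U)) = -1 + 2 / (d%:R ^+ 2).
Proof.
move=> [A [HH [HR Hc]]].
have HA := @herm_hat _ A HH; have HT := @tr_hat _ A HR.
have PT : ptrans2 (mxconj ((d%:R)^-1 *: (1%:M + qmxhat A))) = (d%:R)^-1 *: (1%:M - qmxhat A).
  apply/matrixP => r c; case/mxvec_indexP: r => k a; case/mxvec_indexP: c => l b.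
  have := congr1 (fun X : 'M[C]_(d * 2) => X (mxvec_index k a) (mxvec_index l b)) (@ptconj_hat _ A HR).
  rewrite /= ptrans2E mxconjE oppmxE => PE.
  rewrite ptrans2E mxconjE scaleDE scaleBE rmorphM rmorphD /= PE conjc_inv !conjc_nat.
  by rewrite !mxvec_eq [b == a]eq_sym.
case: d hd1 hodd A HH HR Hc HA HT PT => [//|d'] _ _ A HH HR Hc HA HT PT.
set Ah := qmxhat A in Hc HA HT PT *.
have Ea : Complex (d'.+1%:R - 1 : Rr) 0 = (d'.+1%:R - 1 : C).
  by rewrite (_ : Complex _ 0 = ((d'.+1%:R - 1 : Rr)%:C)%C) // rmorphB rmorph_nat rmorph1.
have Eb : Complex (- (d'.+1%:R + 1) : Rr) 0 = (- (d'.+1%:R + 1) : C).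
  by rewrite (_ : Complex _ 0 = ((- (d'.+1%:R + 1) : Rr)%:C)%C) // rmorphN rmorphD rmorph_nat rmorph1.
have M0 := @key ((d'.+1 * 2).-1) Ah _ _ _ _ HA Hc.
rewrite Ea Eb in M0.
have [HU Htr] := @final ((d'.+1 * 2).-1) Ah d'.+1 erefl isT HA HT M0.
exists ((d'.+1%:R)^-1 *: (1%:M + Ah)); split; first exact: HU.
by rewrite PT.
Qed.
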